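(* Let $u\in V$ and let $t\le\lceil\frac{n-\kappa}{2}\rceil$ be a positive integer. If there exists a $\kappa$-cut $U$ with $u\notin U$ and $|\mathrm{Side}_U(u)|\le t$, then there is a unique such $\kappa$-cut, denoted $\mathrm{Small}_t(u)$, with $u\notin\mathrm{Small}_t(u)$, $|\mathrm{Side}_{\mathrm{Small}_t(u)}(u)|\le t$, and $\mathrm{Side}_{\mathrm{Small}_t(u)}(u)\subseteq\mathrm{Side}_U(u)$ for every $\kappa$-cut $U$ with $u\notin U$ and $|\mathrm{Side}_U(u)|\le t$.
   Context: $G=(V,E)$ is a finite, simple, connected, undirected, non-complete graph with $n=|V|$; $\kappa$ is its vertex connectivity, assumed $\kappa<n/4$. A cut is a set $U\subset V$ whose removal disconnects $G$; a $\kappa$-cut is a cut of size $\kappa$; a side of $U$ is a connected component of the subgraph induced on $V\setminus U$; for $x\notin U$, $\mathrm{Side}_U(x)$ is the side of $U$ containing $x$. *)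

(* Defs.v *)
From mathcomp Require Import all_boot.
Set Implicit Arguments. Unset Strict Implicit. Unset Printing Implicit Defensive.

(* A finite simple undirected graph: vertex type T : finType, adjacency
   relation e : rel T, symmetric and irreflexive. V = [set: T], n = #|T|. *)
Definition simple_graph (T : finType) (e : rel T) : Prop :=
  symmetric e /\ irreflexive e.

Definition graph_connected (T : finType) (e : rel T) : Prop :=
  forall x y : T, connect e x y.

Definition non_complete (T : finType) (e : rel T) : Prop :=
  exists x y : T, x != y /\ ~~ e x y.

Definition removed_rel (T : finType) (e : rel T) (U : {set T}) : rel T :=
  fun x y => [&& x \notin U, y \notin U & e x y].

Definition is_cut (T : finType) (e : rel T) (U : {set T}) : Prop :=
  exists x y : T, [/\ x \notin U, y \notin U & ~~ connect (removed_rel e U) x y].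

Definition vertex_connectivity (T : finType) (e : rel T) (k : nat) : Prop :=
  (exists U : {set T}, is_cut e U /\ #|U| = k) /\
  (forall U : {set T}, is_cut e U -> k <= #|U|).

Definition kcut (T : finType) (e : rel T) (k : nat) (U : {set T}) : Prop :=
  is_cut e U /\ #|U| = k.

(* Side_U(x): the component of G - U containing x (for x \notin U) *)
Definition Side (T : finType) (e : rel T) (U : {set T}) (x : T) : {set T} :=
  [set y | (y \notin U) && connect (removed_rel e U) x y].

(* Main.v *)
Require Import Defs.
From mathcomp Require Import all_boot zify.
From Stdlib Require Import Classical.
Set Implicit Arguments. Unset Strict Implicit.

Section Helpers.
Variables (T : finType) (e : rel T).
Hypothesis esym : symmetric e.

Definition Nb (A : {set T}) : {set T} := [set y | (y \notin A) && [exists x in A, e x y]].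

Lemma inNb (A : {set T}) y : (y \in Nb A) = (y \notin A) && [exists x in A, e x y].
Proof. by rewrite inE. Qed.

Lemma rr_sym (U : {set T}) : symmetric (removed_rel e U).
Proof. by move=> x y; rewrite /removed_rel esym andbCA. Qed.

Lemma conn_sym (U : {set T}) x y : connect (removed_rel e U) x y = connect (removed_rel e U) y x.
Proof. exact: (sym_connect_sym (rr_sym U)). Qed.

Lemma conn_stay (r : rel T) (A : {set T}) x y :
  (forall z w, z \in A -> r z w -> w \in A) -> x \in A -> connect r x y -> y \in A.
Proof.
move=> H xA /connectP [p]; elim: p x xA => [|z p IH] x xA /=; first by move=> _ ->.
case/andP=> rxz pp yE; exact: (IH z (H _ _ xA rxz) pp yE).
Qed.

Lemma Nb_stay (A : {set T}) x y : x \in A -> connect (removed_rel e (Nb A)) x y -> y \in A.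
Proof.
move=> xA; apply: conn_stay xA => z w zA /and3P [_ wN ezw].
apply: contraTT wN => wA; rewrite negbK inE wA /=; apply/existsP; exists z.
by rewrite zA ezw.
Qed.

Lemma Nb_cut (A : {set T}) x y : x \in A -> y \notin A -> y \notin Nb A -> is_cut e (Nb A).
Proof.
move=> xA yA yN; exists x, y; split => //; first by rewrite inE xA.
by apply/negP => /(Nb_stay xA); rewrite (negbTE yA).
Qed.

Lemma side_edge (U : {set T}) x z y : z \in Side e U x -> y \notin U -> e z y -> y \in Side e U x.
Proof.
rewrite !inE => /andP [zU cxz] yU ezy; rewrite yU /=.
apply: connect_trans cxz (connect1 _); by rewrite /removed_rel zU yU ezy.
Qed.

Lemma side_out (U : {set T}) x z y : z \in Side e U x -> y \notin Side e U x -> e z y -> y \in U.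
Proof.
move=> zC yC ezy; apply/negPn/negP => yU.
by move: yC; rewrite (side_edge zC yU ezy).
Qed.

Lemma Side_notin (U : {set T}) x y : y \in Side e U x -> y \notin U.
Proof. by rewrite inE => /andP[]. Qed.

Lemma Side_self (U : {set T}) x : x \notin U -> x \in Side e U x.
Proof. by move=> xU; rewrite inE xU connect0. Qed.

Lemma Side_disj (U : {set T}) x : [disjoint Side e U x & U].
Proof. by rewrite disjoints_subset; apply/subsetP => y /Side_notin; rewrite inE. Qed.

Lemma NbSide (U : {set T}) x : Nb (Side e U x) \subset U.
Proof.
apply/subsetP => y; rewrite inE => /andP [yC /existsP [z /andP [zC ezy]]].
exact: side_out zC yC ezy.
Qed.

Lemma R_edge (U : {set T}) x z y : z \in ~: (Side e U x :|: U) -> y \in Side e U x :|: U -> e z y -> y \in U.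
Proof.
rewrite in_setC !in_setU negb_or => /andP [zC zU] yCU ezy; case/orP: yCU => [yC|//].
apply/negPn/negP => yU.
have eyz : e y z by rewrite esym. by move: (side_edge yC zU eyz); rewrite (negbTE zC).
Qed.

Lemma outside (U : {set T}) x : is_cut e U -> x \notin U -> exists y, y \notin U /\ y \notin Side e U x.
Proof.
case=> [p [q [pU qU npq]]] xU.
case Hp: (p \in Side e U x); last by exists p; rewrite Hp.
exists q; split=> //; apply/negP; rewrite inE qU /= => cxq.
move: Hp; rewrite inE pU /= => cxp. move/negP: npq; apply.
by apply: connect_trans _ cxq; rewrite conn_sym.
Qed.

Lemma card3 (X P Q : {set T}) : [disjoint P & Q] ->
  #|X :&: P| + #|X :&: Q| + #|X :&: ~: (P :|: Q)| = #|X|.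
Proof.
move=> dPQ; rewrite -setDE -(cardsID (P :|: Q) X) setIUr.
have := cardsUI (X :&: P) (X :&: Q).
rewrite setIACA setIid (disjoint_setI0 dPQ) setI0 cards0; lia.
Qed.

Lemma cardU_le (A B : {set T}) : #|A :|: B| <= #|A| + #|B|.
Proof. have := cardsUI A B; lia. Qed.


Lemma ar1 (w a b c b' f g' f' r p a' g s2 s1 u1 n k t : nat) :
  w <= a + b + c -> c + b' + f = k -> b' = b -> g' + f' + 0 = r ->
  p + a' + g = s2 -> s1 + u1 + r = n -> u1 = k -> 0 < p -> a = a' -> g' = g -> f' = f ->
  s1 <= t -> s2 <= t -> 2 * t <= n - k + 1 -> w <= k.
Proof. lia. Qed.

Lemma ar2 (w w' a b c d f b' k : nat) : w <= a+b+c -> w' <= d+b+f -> a+b+d = k ->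
  c+b'+f = k -> b' = b -> k <= w' -> w <= k.
Proof. lia. Qed.

Lemma cross kappa t u (U1 U2 : {set T}) :
  vertex_connectivity e kappa -> 2 * t <= #|T| - kappa + 1 ->
  kcut e kappa U1 -> u \notin U1 -> #|Side e U1 u| <= t ->
  kcut e kappa U2 -> u \notin U2 -> #|Side e U2 u| <= t ->
  exists W, [/\ kcut e kappa W, u \notin W &
     Side e W u \subset Side e U1 u :&: Side e U2 u].
Proof.
move=> vc h2t [cut1 k1] uU1 s1 [cut2 k2] uU2 s2.
set C1 := Side e U1 u; set C2 := Side e U2 u.
set R1 := ~: (C1 :|: U1); set R2 := ~: (C2 :|: U2).
set A := C1 :&: C2; set W := Nb A.
have uC1 : u \in C1 by apply: Side_self.
have uC2 : u \in C2 by apply: Side_self.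
have uA : u \in A by rewrite in_setI uC1 uC2.
have WS : W \subset (U1 :&: C2) :|: (U1 :&: U2) :|: (U2 :&: C1).
  apply/subsetP => y; rewrite inNb => /andP [yA /existsP [z /andP [zA ezy]]].
  move: zA; rewrite in_setI => /andP [zC1 zC2].
  case yC1: (y \in C1).
    have yC2: y \notin C2 by move: yA; rewrite in_setI yC1.
    have yU2 : y \in U2 by apply: side_out zC2 yC2 ezy.
    by rewrite !in_setU !in_setI yU2 yC1 !orbT.
  have yU1 : y \in U1 by apply: side_out zC1 _ ezy; rewrite yC1.
  case yC2: (y \in C2); first by rewrite !in_setU !in_setI yU1 yC2.
  have yU2 : y \in U2 by apply: side_out zC2 _ ezy; rewrite yC2.
  by rewrite !in_setU !in_setI yU1 yU2 orbT.
have Wc : #|W| <= #|U1 :&: C2| + #|U1 :&: U2| + #|U2 :&: C1|.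
  apply: leq_trans (subset_leq_card WS) _.
  apply: leq_trans (cardU_le _ _) _; by rewrite leq_add2r; apply: cardU_le.
have d1 : [disjoint C1 & U1] by apply: Side_disj.
have d2 : [disjoint C2 & U2] by apply: Side_disj.
have cU1 := card3 U1 d2. have cU2 := card3 U2 d1.
have i12 : #|U2 :&: U1| = #|U1 :&: U2| by rewrite setIC.
have [[yo [yoA yoW]] Wle] : (exists y, y \notin A /\ y \notin W) /\ #|W| <= kappa.
  case: (boolP (R1 :&: R2 == set0)) => [/eqP B0|/set0Pn [b bB]].
  - have [y [yU1 yC1]] := outside cut1 uU1.
    split.
      exists y; split; first by rewrite in_setI (negbTE yC1).
      apply/negP => /(subsetP WS); rewrite !in_setU !in_setI (negbTE yU1) (negbTE yC1) /=.
      by rewrite andbF.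
    have cC2 := card3 C2 d1. have cR1 := card3 R1 d2.
    rewrite -/R2 B0 cards0 in cR1.
    have cT := card3 [set: T] d1. rewrite !setTI cardsT in cT.
    have uCC : 0 < #|C2 :&: C1| by apply/card_gt0P; exists u; rewrite in_setI uC1 uC2.
    have i1 : #|U1 :&: C2| = #|C2 :&: U1| by rewrite setIC.
    have i2 : #|R1 :&: C2| = #|C2 :&: R1| by rewrite setIC.
    have i3 : #|R1 :&: U2| = #|U2 :&: R1| by rewrite setIC.
    rewrite -/R1 in cC2 cT cU2.
    have sC1 : #|C1| <= t by []. have sC2 : #|C2| <= t by [].
    rewrite k2 in cU2.
    exact: (ar1 Wc cU2 i12 cR1 cC2 cT k1 uCC i1 i2 i3 sC1 sC2 h2t).
  - move: bB; rewrite in_setI => /andP [bR1 bR2].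
    set W' := Nb (R1 :&: R2).
    have WS' : W' \subset (U1 :&: R2) :|: (U1 :&: U2) :|: (U2 :&: R1).
      apply/subsetP => y; rewrite inNb => /andP [yB /existsP [z /andP [zB ezy]]].
      move: zB; rewrite in_setI => /andP [zR1 zR2].
      case yR1: (y \in R1).
        have yR2: y \notin R2 by move: yB; rewrite in_setI yR1.
        have yU2 : y \in U2 by apply: R_edge zR2 _ ezy; move: yR2; rewrite in_setC negbK.
        by rewrite !in_setU !in_setI yU2 yR1 !orbT.
      have yU1 : y \in U1 by apply: R_edge zR1 _ ezy; move: yR1; rewrite in_setC => /negbFE.
      case yR2: (y \in R2); first by rewrite !in_setU !in_setI yU1 yR2.
      have yU2 : y \in U2 by apply: R_edge zR2 _ ezy; move: yR2; rewrite in_setC => /negbFE.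
      by rewrite !in_setU !in_setI yU1 yU2 orbT.
    have bR1' := bR1; move: bR1'; rewrite in_setC in_setU negb_or => /andP [bC1 bU1].
    have uB : u \notin R1 :&: R2 by rewrite in_setI in_setC in_setU uC1.
    have uW' : u \notin W'.
      by apply/negP => /(subsetP WS'); rewrite !in_setU !in_setI (negbTE uU1) (negbTE uU2).
    have cutW' : is_cut e W' by apply: Nb_cut (_ : b \in R1 :&: R2) uB uW'; rewrite in_setI bR1 bR2.
    have kW' := vc.2 _ cutW'.
    have Wc' : #|W'| <= #|U1 :&: R2| + #|U1 :&: U2| + #|U2 :&: R1|.
      apply: leq_trans (subset_leq_card WS') _.
      apply: leq_trans (cardU_le _ _) _; by rewrite leq_add2r; apply: cardU_le.
    rewrite -/R1 -/R2 in cU1 cU2.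
    rewrite k1 in cU1; rewrite k2 in cU2.
    split; first last.
      exact: (ar2 Wc Wc' cU1 cU2 i12 kW').
    exists b; split; first by rewrite in_setI (negbTE bC1).
    apply/negP => /(subsetP WS); rewrite !in_setU !in_setI (negbTE bU1) /= => /andP [_].
    by move: bC1 => /negbTE ->.
have cutW : is_cut e W by apply: Nb_cut uA yoA yoW.
exists W; split.
- by split => //; have := vc.2 _ cutW; lia.
- by rewrite inNb uA.
- by apply/subsetP => y; rewrite inE => /andP [_ c]; apply: Nb_stay uA c.
Qed.

Lemma cut_N kappa u (U : {set T}) : vertex_connectivity e kappa ->
  kcut e kappa U -> u \notin U -> U = Nb (Side e U u).
Proof.
move=> vc [cutU kU] uU.
have sub := NbSide U u.
have [y [yU yC]] := outside cutU uU.
have yN : y \notin Nb (Side e U u).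
  by apply/negP => /(subsetP sub); rewrite (negbTE yU).
have cutN := Nb_cut (Side_self uU) yC yN.
have := vc.2 _ cutN.
by move=> h; apply/eqP; rewrite eq_sym eqEcard sub /= kU.
Qed.

End Helpers.

Theorem theorem6 (T : finType) (e : rel T) (kappa : nat) (u : T) (t : nat) :
  simple_graph e -> graph_connected e -> non_complete e ->
  vertex_connectivity e kappa -> 4 * kappa < #|T| ->
  0 < t -> t <= (#|T| - kappa).+1 %/ 2 ->
  (exists U : {set T}, [/\ kcut e kappa U, u \notin U & #|Side e U u| <= t]) ->
  exists! S : {set T},
    [/\ kcut e kappa S, u \notin S, #|Side e S u| <= t &
      forall U : {set T}, kcut e kappa U -> u \notin U -> #|Side e U u| <= t ->
        Side e S u \subset Side e U u].
Proof.
move=> [esym _] _ _ vc hn t0 ht [U0 [k0 u0 s0]].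
have h2t : 2 * t <= #|T| - kappa + 1 by lia.
pose valid U := [/\ kcut e kappa U, u \notin U & #|Side e U u| <= t].
have main : forall m U, valid U -> #|Side e U u| <= m -> exists S, valid S /\
    forall U', valid U' -> Side e S u \subset Side e U' u.
  elim=> [|m IH] U [kU uU sU] hm.
    have : 0 < #|Side e U u| by apply/card_gt0P; exists u; apply: Side_self.
    lia.
  case: (classic (forall U', valid U' -> Side e U u \subset Side e U' u)) => [H|H].
    by exists U; split.
  have [U' HU'] := not_all_ex_not _ _ H.
  have [vU' nsub] := imply_to_and _ _ HU'.
  case: vU' => [kU' uU' sU'].
  have [W [kW uW sW]] := cross esym vc h2t kU uU sU kU' uU' sU'.
  have sub1 : Side e W u \subset Side e U u := subset_trans sW (subsetIl _ _).
  have lt : #|Side e W u| < #|Side e U u|.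
    rewrite ltnNge; apply/negP => hle; apply: nsub.
    have eqWC : Side e W u = Side e U u by apply/eqP; rewrite eqEcard sub1 hle.
    by rewrite -eqWC; apply: subset_trans sW (subsetIr _ _).
  apply: (IH W) => //; last by lia.
  by split => //; lia.
have [S [[kS uS sS] HS]] := main _ U0 (And3 k0 u0 s0) (leqnn _).
exists S; split.
  by split => // U kU uU sU; apply: HS.
move=> S' [kS' uS' sS' HS'].
rewrite (cut_N esym vc kS uS) (cut_N esym vc kS' uS').
congr Nb; apply/eqP; rewrite eqEsubset (HS' S kS uS sS) andbT; by apply: HS; split.
Qed.
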